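(* Let $A\in\mathbb{R}^{n\times n}$ be symmetric positive definite with eigenvalues $0<\lambda_1\le\cdots\le\lambda_n$ and a corresponding orthonormal basis of eigenvectors $v_1,\dots,v_n$, let $c\in\mathbb{R}^n$, and consider the Barzilai--Borwein (BB) method applied to $\min_{x\in\mathbb{R}^n} f(x)=\frac12 x^\top Ax-c^\top x$, started from an arbitrary $x_0\in\mathbb{R}^n$. Let $g_k=Ax_k-c$ and write $g_k=\sum_{i=1}^n d_k^i v_i$. Then $$\left|d_{k+1}^i\right|\le \left|d_k^i\right|\cdot\max\left\{\frac{\lambda_i}{\lambda_1}-1,\ 1-\frac{\lambda_i}{\lambda_n}\right\}\quad\text{for all } k\ge 1,\ 1\le i\le n.$$ Moreover, if for some $k\ge 1$ and some index $i$ one of the following conditions holds: (1) $d_{k-1}^i$ is in the shrinking mode, i.e. $\sum_{j=1}^n(\lambda_j-\lambda_i)(d_{k-1}^j)^2\ge 0$; (2) $d_{k-1}^i$ is in the fluctuation mode, i.e. $\sum_{j=1}^n(\lambda_j-\lambda_i)(d_{k-1}^j)^2<0$, and $(d_{k-1}^i)^2\ge\sum_{j=1}^{i-1}(d_{k-1}^j)^2$; then $$\left|d_{k+1}^i\right|\le\left(1-\frac{1}{\kappa}\right)\left|d_k^i\right|,$$ where $\kappa=\lambda_n/\lambda_1$ is the condition number of $A$.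
   Context: The BB method for this problem: $x_1=x_0-\alpha_0 g_0$ with the exact line-search (steepest descent) step $\alpha_0=\frac{g_0^\top g_0}{g_0^\top A g_0}$, and for $k\ge1$, $x_{k+1}=x_k-\alpha_k g_k$ with $\alpha_k=\frac{s_{k-1}^\top s_{k-1}}{s_{k-1}^\top y_{k-1}}$, $s_{k-1}=x_k-x_{k-1}$, $y_{k-1}=g_k-g_{k-1}$; for this quadratic this equals $\alpha_k=\frac{g_{k-1}^\top g_{k-1}}{g_{k-1}^\top A g_{k-1}}$. Equivalently, the coefficients satisfy $d_1^i=d_0^i\cdot\frac{\sum_{j}(\lambda_j-\lambda_i)(d_0^j)^2}{\sum_j\lambda_j(d_0^j)^2}$ and $d_{k+1}^i=d_k^i\cdot\frac{\sum_{j}(\lambda_j-\lambda_i)(d_{k-1}^j)^2}{\sum_j\lambda_j(d_{k-1}^j)^2}$ for $k\ge1$. Convention: if some gradient vanishes, the method has reached the minimizer and all subsequent gradients (coefficients) are taken to be zero. *)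

(* Defs.v *)
From mathcomp Require Import all_boot all_order all_algebra.
Set Implicit Arguments. Unset Strict Implicit. Unset Printing Implicit Defensive.
Import Order.TTheory GRing.Theory Num.Theory.
Local Open Scope ring_scope.

Definition dotv {R : fieldType} {n : nat} (u v : 'cV[R]_n) : R :=
  \sum_(i < n) u i 0 * v i 0.

(* gradient of f(x) = 1/2 x^T A x - c^T x *)
Definition qgrad {R : fieldType} {n : nat} (A : 'M[R]_n) (c : 'cV[R]_n)
  (x : 'cV[R]_n) : 'cV[R]_n := A *m x - c.

(* First step: exact line search (Cauchy) step size. *)
Definition bb_x1 {R : fieldType} {n : nat} (A : 'M[R]_n) (c x0 : 'cV[R]_n) :=
  let g0 := qgrad A c x0 in
  x0 - (dotv g0 g0 / dotv g0 (A *m g0)) *: g0.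

Definition bb_step {R : fieldType} {n : nat} (A : 'M[R]_n) (c : 'cV[R]_n)
  (xprev xcur : 'cV[R]_n) : 'cV[R]_n :=
  let s := xcur - xprev in
  let y := qgrad A c xcur - qgrad A c xprev in
  xcur - (dotv s s / dotv s y) *: qgrad A c xcur.

(* bb_pair k = (x_k, x_{k+1}) *)
Fixpoint bb_pair {R : fieldType} {n : nat} (A : 'M[R]_n) (c x0 : 'cV[R]_n)
  (k : nat) : 'cV[R]_n * 'cV[R]_n :=
  match k with
  | 0%N => (x0, bb_x1 A c x0)
  | k'.+1 => let p := bb_pair A c x0 k' in (p.2, bb_step A c p.1 p.2)
  end.

Definition bb_iter {R : fieldType} {n : nat} (A : 'M[R]_n) (c x0 : 'cV[R]_n)
  (k : nat) : 'cV[R]_n := (bb_pair A c x0 k).1.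

Definition bb_grad {R : fieldType} {n : nat} (A : 'M[R]_n) (c x0 : 'cV[R]_n)
  (k : nat) : 'cV[R]_n := qgrad A c (bb_iter A c x0 k).

(* Main.v *)
Require Import Defs.
From mathcomp Require Import all_boot all_order all_algebra.
From mathcomp Require Import ring lra.
Import Order.TTheory GRing.Theory Num.Theory.
Set Implicit Arguments. Unset Strict Implicit. Unset Printing Implicit Defensive.
Local Open Scope ring_scope.

Lemma comb_entry (R : realFieldType) n (V : 'M[R]_n) (c : 'I_n -> R) k :
  (\sum_j c j *: col j V) k 0 = \sum_j c j * V k j.
Proof. by rewrite summxE; apply eq_bigr => j _; rewrite !mxE. Qed.

Lemma orthoE (R : realFieldType) n (V : 'M[R]_n) : V^T *m V = 1%:M ->
  forall j l, \sum_k V k j * V k l = (j == l)%:R.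
Proof.
move=> hV j l; have := congr1 (fun M : 'M[R]_n => M j l) hV => /=.
rewrite !mxE => <-; apply eq_bigr => k _; by rewrite !mxE.
Qed.

Lemma dot_comb (R : realFieldType) n (V : 'M[R]_n) (c c' : 'I_n -> R) :
  V^T *m V = 1%:M ->
  dotv (\sum_j c j *: col j V) (\sum_j c' j *: col j V) = \sum_j c j * c' j.
Proof.
move=> hV; rewrite /dotv.
under eq_bigr do rewrite !comb_entry big_distrl /=.
under eq_bigr do under eq_bigr do rewrite big_distrr /=.
rewrite exchange_big /=; apply eq_bigr => j _.
rewrite exchange_big /= (bigD1 j) //=.
rewrite [X in _ + X]big1 ?addr0.
  have h := orthoE hV j j; rewrite eqxx in h; rewrite -[RHS]mulr1 -[1]h mulr_sumr; apply eq_bigr => k _; ring.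
move=> l hl; have h : \sum_k V k j * V k l = 0 by rewrite (orthoE hV) eq_sym (negbTE hl).
transitivity (c j * c' l * \sum_k V k j * V k l); last by rewrite h mulr0.
rewrite mulr_sumr; apply eq_bigr => k _; ring.
Qed.
Lemma core (R : realFieldType) n (lam d : 'I_n.+1 -> R) (i : 'I_n.+1) :
  0 < lam ord0 -> (forall i j : 'I_n.+1, (i <= j)%N -> lam i <= lam j) ->
  0 < \sum_j d j ^+ 2 ->
  let D := \sum_j d j ^+ 2 in let L := \sum_j lam j * d j ^+ 2 in
  `|1 - D / L * lam i| <= Num.max (lam i / lam ord0 - 1) (1 - lam i / lam ord_max) /\
  ((0 <= \sum_(j < n.+1) (lam j - lam i) * d j ^+ 2
      \/ (\sum_(j < n.+1) (lam j - lam i) * d j ^+ 2 < 0 /\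
          \sum_(j < n.+1 | (j < i)%N) d j ^+ 2 <= d i ^+ 2)) ->
   `|1 - D / L * lam i| <= 1 - (lam ord_max / lam ord0)^-1).
Proof.
move=> l1p mono Dp D L.
set l1 := lam ord0; set ln := lam ord_max.
have lb j : l1 <= lam j by apply: mono.
have ub j : lam j <= ln by apply: mono; rewrite -ltnS.
have lnp : 0 < ln by apply: lt_le_trans (ub ord0).
have lip : 0 < lam i by apply: lt_le_trans (lb i).
have LlD : l1 * D <= L.
  rewrite /D mulr_sumr; apply: ler_sum => j _; apply: ler_wpM2r => //; exact: sqr_ge0.
have LuD : L <= ln * D.
  rewrite /D mulr_sumr; apply: ler_sum => j _; apply: ler_wpM2r => //; exact: sqr_ge0.
have Lp : 0 < L by apply: lt_le_trans LlD; rewrite mulr_gt0.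
have aub : D / L <= l1^-1.
  by rewrite ler_pdivrMr // -ler_pdivrMl ?invr_gt0 // invrK.
have alb : ln^-1 <= D / L.
  by rewrite ler_pdivlMr // -ler_pdivlMl ?invr_gt0 // invrK.
have h1 : D / L * lam i <= lam i / l1 by rewrite [_ / l1]mulrC ler_wpM2r // ltW.
have h2 : lam i / ln <= D / L * lam i by rewrite [_ / ln]mulrC ler_wpM2r // ltW.
split.
  set M := Num.max _ _.
  have m1 : lam i / l1 - 1 <= M by rewrite le_max lexx.
  have m2 : 1 - lam i / ln <= M by rewrite le_max lexx orbT.
  rewrite ler_norml; apply/andP; split; lra.
have Seq : \sum_(j < n.+1) (lam j - lam i) * d j ^+ 2 = L - lam i * D.
  by rewrite /L /D mulr_sumr -sumrB; apply eq_bigr => j _; rewrite mulrBl.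
have l1n : l1 / ln <= 1 by rewrite ler_pdivrMr // mul1r; apply: ub.
have hk : l1 / ln <= D / L * lam i.
  rewrite mulrC; apply: ler_pM.
  - by rewrite invr_ge0 ltW.
  - exact: ltW.
  - exact: alb.
  - exact: lb.
rewrite invf_div Seq; case.
  move=> hS; have ha : D / L * lam i <= 1.
    by rewrite mulrAC ler_pdivrMr // mul1r mulrC; lra.
  rewrite ger0_norm; lra.
move=> [hS hsum].
have key : lam i * D - L <= (lam i - l1) * d i ^+ 2.
  have -> : lam i * D - L = \sum_j (lam i - lam j) * d j ^+ 2.
    by rewrite /L /D mulr_sumr -sumrB; apply eq_bigr => j _; rewrite mulrBl.
  rewrite (bigID (fun j : 'I_n.+1 => (j < i)%N)) /=.
  have neg : \sum_(j < n.+1 | ~~ (j < i)%N) (lam i - lam j) * d j ^+ 2 <= 0.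
    apply: sumr_le0 => j hj; apply: mulr_le0_ge0; last exact: sqr_ge0.
    rewrite subr_le0; apply: mono; by rewrite leqNgt.
  have pos : \sum_(j < n.+1 | (j < i)%N) (lam i - lam j) * d j ^+ 2 <=
             (lam i - l1) * d i ^+ 2.
    apply: le_trans (_ : (lam i - l1) * \sum_(j < n.+1 | (j < i)%N) d j ^+ 2 <= _).
      rewrite mulr_sumr; apply: ler_sum => j _; apply: ler_wpM2r; first exact: sqr_ge0.
      by rewrite lerD2l lerN2.
    by apply: ler_wpM2l => //; rewrite subr_ge0.
  lra.
have Li : lam i * d i ^+ 2 <= L.
  rewrite /L (bigD1 i) //= lerDl; apply: sumr_ge0 => j _.
  apply: mulr_ge0; [exact: ltW (lt_le_trans l1p (lb j))|exact: sqr_ge0].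
have mid : (lam i - l1) * d i ^+ 2 <= (1 - l1 / ln) * (lam i * d i ^+ 2).
  rewrite [X in _ <= X]mulrA; apply: ler_wpM2r; first exact: sqr_ge0.
  have : lam i / ln <= 1 by rewrite ler_pdivrMr // mul1r.
  have -> : (1 - l1 / ln) * lam i = lam i - l1 * (lam i / ln) by field; rewrite gt_eqF.
  move=> hh; have : l1 * (lam i / ln) <= l1 by rewrite -[X in _ <= X]mulr1 ler_wpM2l // ltW.
  lra.
have last : (1 - l1 / ln) * (lam i * d i ^+ 2) <= (1 - l1 / ln) * L.
  by apply: ler_wpM2l => //; lra.
have gt1 : 1 < D / L * lam i.
  by rewrite mulrAC ltr_pdivlMr // mul1r mulrC; lra.
rewrite ltr0_norm; last lra.
have -> : - (1 - D / L * lam i) = (lam i * D - L) / L.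
  by field; rewrite lt0r_neq0.
by rewrite ler_pdivrMr //; lra.
Qed.

Lemma dot_scale (R : realFieldType) n (u v : 'cV[R]_n) a b :
  dotv (a *: u) (b *: v) = a * b * dotv u v.
Proof. rewrite /dotv mulr_sumr; apply eq_bigr => k _; rewrite !mxE; ring. Qed.

Lemma A_comb (R : realFieldType) n (A V : 'M[R]_n) (lam c : 'I_n -> R) :
  (forall i, A *m col i V = lam i *: col i V) ->
  A *m (\sum_j c j *: col j V) = \sum_j (lam j * c j) *: col j V.
Proof.
move=> hE; rewrite mulmx_sumr; apply eq_bigr => j _.
by rewrite -scalemxAr hE scalerA mulrC.
Qed.

Lemma coef_uniq (R : realFieldType) n (V : 'M[R]_n) (c c' : 'I_n -> R) :
  V^T *m V = 1%:M ->
  \sum_j c j *: col j V = \sum_j c' j *: col j V -> forall i, c i = c' i.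
Proof.
move=> hV h i.
have := congr1 (dotv (\sum_j (j == i)%:R *: col j V)) h; rewrite !dot_comb //.
have E (f : 'I_n -> R) : \sum_j (j == i)%:R * f j = f i.
  rewrite (bigD1 i) //= eqxx mul1r big1 ?addr0 // => j /negbTE ->; by rewrite mul0r.
by rewrite !E.
Qed.

Theorem proposition1 (R : realFieldType) (n : nat)
  (A : 'M[R]_n.+1) (lam : 'I_n.+1 -> R) (V : 'M[R]_n.+1)
  (c x0 : 'cV[R]_n.+1) (d : nat -> 'I_n.+1 -> R) :
  A^T = A ->
  (* orthonormal eigenbasis v_i = col i V with A v_i = lam_i v_i *)
  V^T *m V = 1%:M ->
  (forall i, A *m col i V = lam i *: col i V) ->
  0 < lam ord0 ->
  (forall i j : 'I_n.+1, (i <= j)%N -> lam i <= lam j) ->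
  (* coordinates of the BB gradients in the eigenbasis *)
  (forall k, bb_grad A c x0 k = \sum_(i < n.+1) d k i *: col i V) ->
  let kappa := lam ord_max / lam ord0 in
  (forall (k : nat) (i : 'I_n.+1), (1 <= k)%N ->
     `|d k.+1 i| <= `|d k i| *
        Num.max (lam i / lam ord0 - 1) (1 - lam i / lam ord_max)) /\
  (forall (k : nat) (i : 'I_n.+1), (1 <= k)%N ->
     (0 <= \sum_(j < n.+1) (lam j - lam i) * d k.-1 j ^+ 2
      \/ (\sum_(j < n.+1) (lam j - lam i) * d k.-1 j ^+ 2 < 0 /\
          \sum_(j < n.+1 | (j < i)%N) d k.-1 j ^+ 2 <= d k.-1 i ^+ 2)) ->
     `|d k.+1 i| <= (1 - kappa^-1) * `|d k i|).
Proof.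
move=> hsym hV hE l0 mono hd kappa.
pose g k := bb_grad A c x0 k.
pose x k := bb_iter A c x0 k.
pose a k := dotv (g k) (g k) / dotv (g k) (A *m g k).
have Dk k : dotv (g k) (g k) = \sum_j d k j ^+ 2.
  by rewrite /g hd dot_comb //; apply eq_bigr => j _; rewrite expr2.
have Lk k : dotv (g k) (A *m g k) = \sum_j lam j * d k j ^+ 2.
  by rewrite /g hd (A_comb _ hE) dot_comb //; apply eq_bigr => j _; rewrite expr2; ring.
have gz0 k : g k = 0 -> forall j, d k j = 0.
  move=> h j; symmetry; apply: (coef_uniq (c := fun _ => 0) hV); rewrite -hd -/(g k) h.
  by rewrite big1 // => l _; rewrite scale0r.
have LD k : lam ord0 * \sum_j d k j ^+ 2 <= \sum_j lam j * d k j ^+ 2.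
  rewrite mulr_sumr; apply: ler_sum => j _; apply: ler_wpM2r; first exact: sqr_ge0.
  exact: mono.
have Dpos k : g k != 0 -> 0 < \sum_j d k j ^+ 2.
  move=> hg; rewrite lt_def sumr_ge0 ?andbT; last by move=> j _; exact: sqr_ge0.
  apply/eqP => /psumr_eq0P h; move/eqP: hg; apply; rewrite /g hd big1 // => j _.
  have := h (fun _ _ => sqr_ge0 _) j isT; move/eqP; rewrite sqrf_eq0 => /eqP ->; by rewrite scale0r.
have aZ k : a k = 0 -> g k = 0.
  move=> ha; apply/eqP; apply/negPn/negP => hg.
  have hD := Dpos k hg; have hL : 0 < \sum_j lam j * d k j ^+ 2.
    by apply: lt_le_trans (LD k); rewrite mulr_gt0.
  move: ha; rewrite /a Dk Lk => /eqP; rewrite mulf_eq0 invr_eq0 !gt_eqF //.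
have gS k al : x k.+1 = x k - al *: g k -> g k.+1 = g k - al *: (A *m g k).
  rewrite /g /bb_grad /qgrad -/(x k.+1) -/(x k) => ->.
  by rewrite mulmxBr scalemxAr addrAC.
have inv k : exists al, x k.+1 = x k - al *: g k /\ (al = 0 -> g k = 0) /\
    ((0 < k)%N -> g k = 0 \/ al = a k.-1).
  elim: k => [|k [al [hx [hz _]]]].
    by exists (a 0%N); split; [by []| split; [exact: aZ|by []]].
  have hg := gS k al hx.
  pose s := x k.+1 - x k.
  pose y := g k.+1 - g k.
  exists (dotv s s / dotv s y).
  have hs : s = (- al) *: g k by rewrite /s hx addrAC subrr add0r scaleNr.
  have hy : y = (- al) *: (A *m g k) by rewrite /y hg addrAC subrr add0r scaleNr.
  split; first by [].
  case: (eqVneq al 0) => [al0|alnz].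
    have gk0 := hz al0; have gk1 : g k.+1 = 0 by rewrite hg al0 scale0r subr0.
    by split=> // _; left.
  have hb : dotv s s / dotv s y = a k.
    rewrite hs hy !dot_scale -mulf_div divff ?mul1r //.
    by rewrite mulf_neq0 // oppr_eq0.
  rewrite hb; split; last by move=> _; right.
  by move=> /aZ h; rewrite hg h mulmx0 scaler0 subr0.
have main m i : (d m.+2 i = d m.+1 i * (1 - (\sum_j d m j ^+ 2) /
                    (\sum_j lam j * d m j ^+ 2) * lam i)
                 /\ 0 < \sum_j d m j ^+ 2) \/ (d m.+1 i = 0 /\ d m.+2 i = 0).
  have [al [hx [hz h3]]] := inv m.+1.
  have hg := gS _ _ hx.
  case: (eqVneq (g m.+1) 0) => [g1|g1].
    right; split; first exact: gz0.
    apply: gz0; by rewrite hg g1 mulmx0 scaler0 subr0.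
  left; have [/eqP|hal] := h3 isT; first by rewrite (negbTE g1).
  rewrite hal in hg.
  have gm : g m != 0.
    apply/negP => /eqP gm0; move/eqP: g1; apply.
    have [al' [hx' _]] := inv m.
    by rewrite (gS _ _ hx') gm0 mulmx0 scaler0 subr0.
  split; last exact: Dpos.
  rewrite /= /a Dk Lk in hg.
  have := hg; rewrite /g !hd (A_comb _ hE) scaler_sumr -sumrB => hh.
  set aa := (_ / _) in hh.
  have hh2 : \sum_(i < n.+1) d m.+2 i *: col i V =
      \sum_i (d m.+1 i - aa * (lam i * d m.+1 i)) *: col i V.
    by rewrite hh; apply eq_bigr => j _; rewrite scalerA scalerBl.
  rewrite (coef_uniq hV hh2 i) /aa; ring.
split.
  move=> [//|m] i _.
  have [[-> hD]|[-> ->]] := main m i; last by rewrite normr0 !mul0r.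
  have [c1 _] := core i l0 mono hD.
  by rewrite normrM ler_wpM2l.
move=> [//|m] i _ hc.
have [[-> hD]|[-> ->]] := main m i; last by rewrite normr0 mulr0.
have [_ c2] := core i l0 mono hD.
by rewrite normrM mulrC ler_wpM2r // c2.
Qed.
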